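(* Let $(S,\curlyvee)$ be an algebra with one binary operation. Then $(S,\curlyvee)$ is functional (isomorphic to a set of partial functions closed under restricted union, with $\curlyvee$ interpreted as restricted union) if and only if $(S,\curlyvee)$ is a $\curlyvee$-algebra. Moreover, the class of $\curlyvee$-algebras consists of (algebras isomorphic to) subdirect products of flat $\curlyvee$-algebras.
   Context: For sets $X,Y$, $\mathrm{Par}(X,Y)$ is the set of partial functions from $X$ to $Y$, viewed as sets of ordered pairs. For $f,g\in\mathrm{Par}(X,Y)$ let $g-f$ denote the restriction of $g$ to $X\setminus\mathrm{dom}(f)$. Restricted union is $f\curlyvee g=(f-g)\cup(f\cap g)\cup(g-f)$ (the restriction of the relation $f\cup g$ to the points where it is single-valued). An algebra $(S,\curlyvee)$ is functional if it is isomorphic to $(A,\curlyvee)$ for some $A\subseteq\mathrm{Par}(X,Y)$ closed under $\curlyvee$, for some sets $X,Y$. A left regular band is a set with a binary operation $\sqcup$ satisfying $a\sqcup(b\sqcup c)=(a\sqcup b)\sqcup c$, $a\sqcup a=a$, $a\sqcup b=(a\sqcup b)\sqcup a$. On an algebra with operation $\sqcup$ write $a\lesssim b$ iff $b\sqcup a=b$. A $\curlyvee$-algebra is an algebra $(S,\curlyvee)$ such that, defining $a\sqcup b=a\curlyvee(a\curlyvee b)$ for all $a,b\in S$: $(S,\sqcup)$ is a left regular band; $\curlyvee$ is commutative and idempotent; $(a\curlyvee b)\sqcup(a\sqcup b)=a\sqcup b$; $a\sqcup(b\curlyvee c)=(a\sqcup b)\curlyvee(a\sqcup c)$; and for all $a,b,c,d$,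 if $d\lesssim a$, $d\lesssim b$, $d\lesssim c$, $d\lesssim a\curlyvee b$ and $d\lesssim b\curlyvee c$ then $d\lesssim a\curlyvee c$. A flat $\curlyvee$-algebra is an algebra $(S,\curlyvee)$ with an element $0\in S$ such that $a\curlyvee b=0$ whenever $a,b$ are distinct and both different from $0$, and $a\curlyvee a=a$, $a\curlyvee 0=0\curlyvee a=a$ for all $a\in S$. *)

(* Defs.v *)
Definition rel (X Y : Type) := X -> Y -> Prop.

Definition is_partial_function {X Y : Type} (f : rel X Y) : Prop :=
  forall x y y', f x y -> f x y' -> y = y'.

Definition dom {X Y : Type} (f : rel X Y) (x : X) : Prop := exists y, f x y.

Definition rel_minus {X Y : Type} (g f : rel X Y) : rel X Y :=
  fun x y => g x y /\ ~ dom f x.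

Definition rel_inter {X Y : Type} (f g : rel X Y) : rel X Y :=
  fun x y => f x y /\ g x y.

Definition rel_union {X Y : Type} (f g : rel X Y) : rel X Y :=
  fun x y => f x y \/ g x y.

Definition restricted_union {X Y : Type} (f g : rel X Y) : rel X Y :=
  rel_union (rel_union (rel_minus f g) (rel_inter f g)) (rel_minus g f).

Definition functional (S : Type) (op : S -> S -> S) : Prop :=
  exists (X Y : Type) (A : rel X Y -> Prop),
    (forall f, A f -> is_partial_function f) /\
    (forall f g, A f -> A g -> A (restricted_union f g)) /\
    exists h : S -> rel X Y,
      (forall a b, h a = h b -> a = b) /\
      (forall f, A f <-> exists a, h a = f) /\
      (forall a b, h (op a b) = restricted_union (h a) (h b)).

Definition sqcup {S : Type} (op : S -> S -> S) (a b : S) : S := op a (op a b).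
Definition lesssim {S : Type} (op : S -> S -> S) (a b : S) : Prop :=
  sqcup op b a = b.

Definition left_regular_band {S : Type} (m : S -> S -> S) : Prop :=
  (forall a b c, m a (m b c) = m (m a b) c) /\
  (forall a, m a a = a) /\
  (forall a b, m a b = m (m a b) a).

Definition vee_algebra (S : Type) (op : S -> S -> S) : Prop :=
  left_regular_band (sqcup op) /\
  (forall a b, op a b = op b a) /\
  (forall a, op a a = a) /\
  (forall a b, sqcup op (op a b) (sqcup op a b) = sqcup op a b) /\
  (forall a b c, sqcup op a (op b c) = op (sqcup op a b) (sqcup op a c)) /\
  (forall a b c d,
      lesssim op d a -> lesssim op d b -> lesssim op d c ->
      lesssim op d (op a b) -> lesssim op d (op b c) ->
      lesssim op d (op a c)).

Definition flat_vee_algebra (T : Type) (op : T -> T -> T) (z : T) : Prop :=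
  (forall a b, a <> b -> a <> z -> b <> z -> op a b = z) /\
  (forall a, op a a = a) /\
  (forall a, op a z = a /\ op z a = a).

Definition subdirect_product_of_flat (S : Type) (op : S -> S -> S) : Prop :=
  exists (I : Type) (T : I -> Type) (opT : forall i, T i -> T i -> T i)
         (z : forall i, T i),
    (forall i, flat_vee_algebra (T i) (opT i) (z i)) /\
    exists B : (forall i, T i) -> Prop,
      (forall p q, B p -> B q -> B (fun i => opT i (p i) (q i))) /\
      (forall i (t : T i), exists p, B p /\ p i = t) /\
      exists h : S -> forall i, T i,
        (forall a b, h a = h b -> a = b) /\
        (forall p, B p <-> exists a, h a = p) /\
        (forall a b, h (op a b) = (fun i => opT i (h a i) (h b i))).

(* Main.v *)
Require Import Defs.
From Stdlib Require Import Classical FunctionalExtensionality PropExtensionality ClassicalEpsilon ProofIrrelevance.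
From mathcomp Require classical_sets.

Lemma sig_eq_val (A : Type) (P : A -> Prop) (x y : sig P) :
  proj1_sig x = proj1_sig y -> x = y.
Proof.
  destruct x as [x px], y as [y py]; simpl; intros ->; f_equal; apply proof_irrelevance.
Qed.

Definition fopt {Q : Type} (p q : option Q) : option Q :=
  match p, q with
  | None, _ => q
  | _, None => p
  | Some x, Some y => if excluded_middle_informative (x = y) then p else None
  end.

Lemma fopt_idem {Q} (p : option Q) : fopt p p = p.
Proof. destruct p as [x|]; simpl; auto. destruct (excluded_middle_informative (x = x)); congruence. Qed.

Lemma fopt_none_r {Q} (p : option Q) : fopt p None = p.
Proof. destruct p; reflexivity. Qed.

Lemma sd_of_family (S : Type) (op : S -> S -> S) (I : Type) (Q : I -> Type)
  (phi : forall i, S -> option (Q i)) :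
  (forall i a b, phi i (op a b) = fopt (phi i a) (phi i b)) ->
  (forall a b, (forall i, phi i a = phi i b) -> a = b) ->
  subdirect_product_of_flat S op.
Proof.
  intros hom sep.
  set (K := (I * S)%type).
  set (Tt := fun k : K => {t : option (Q (fst k)) | exists a, phi (fst k) a = t}).
  assert (clos : forall k (p q : Tt k), exists a, phi (fst k) a = fopt (proj1_sig p) (proj1_sig q)).
  { intros k [p [a Ha]] [q [b Hb]]; simpl. exists (op a b). rewrite hom; congruence. }
  set (opT := fun k (p q : Tt k) => exist _ (fopt (proj1_sig p) (proj1_sig q)) (clos k p q) : Tt k).
  assert (imgeq : forall i, ~ (exists a, phi i a = None) -> forall a b, phi i a = phi i b).
  { intros i hn a b.
    destruct (phi i a) as [x|] eqn:Ea; [|exfalso; eauto].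
    destruct (phi i b) as [y|] eqn:Eb; [|exfalso; eauto].
    destruct (excluded_middle_informative (x = y)) as [->|nxy]; auto.
    exfalso; apply hn; exists (op a b). rewrite hom, Ea, Eb; simpl.
    destruct (excluded_middle_informative (x = y)); [contradiction|reflexivity]. }
  set (zt := fun k : K =>
    match excluded_middle_informative (exists a, phi (fst k) a = None) with
    | left H => exist _ None H
    | right _ => exist _ (phi (fst k) (snd k)) (ex_intro _ (snd k) eq_refl)
    end : Tt k).
  exists K, Tt, opT, zt. split.
  { intro k. unfold zt. destruct (excluded_middle_informative (exists a, phi (fst k) a = None)) as [Hn|Hn].
    - split; [|split].
      + intros [p hp] [q hq] hpq hpz hqz. apply sig_eq_val; simpl.
        destruct p as [x|]; [|exfalso; apply hpz; apply sig_eq_val; reflexivity].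
        destruct q as [y|]; [|exfalso; apply hqz; apply sig_eq_val; reflexivity].
        simpl. destruct (excluded_middle_informative (x = y)) as [->|]; auto.
        exfalso; apply hpq; apply sig_eq_val; reflexivity.
      + intros [p hp]; apply sig_eq_val; simpl; apply fopt_idem.
      + intros [p hp]; split; apply sig_eq_val; simpl; [apply fopt_none_r|reflexivity].
    - assert (all : forall p q : Tt k, p = q).
      { intros [p [a Ha]] [q [b Hb]]. apply sig_eq_val; simpl. subst. apply imgeq; auto. }
      split; [|split].
      + intros p q hpq. exfalso; apply hpq, all.
      + intros [p hp]; apply sig_eq_val; simpl; apply fopt_idem.
      + intros p. split; apply all. }
  set (h := fun a (k : K) => exist _ (phi (fst k) a) (ex_intro _ a eq_refl) : Tt k).
  assert (hh : forall a b, h (op a b) = fun k => opT k (h a k) (h b k)).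
  { intros a b. apply functional_extensionality_dep; intro k. apply sig_eq_val; simpl. apply hom. }
  exists (fun p => exists a, h a = p). split; [|split].
  - intros p q [a <-] [b <-]. exists (op a b). apply hh.
  - intros k [t [a Ha]]. exists (h a). split; [eauto|]. apply sig_eq_val; simpl; auto.
  - exists h. split; [|split].
    + intros a b E. apply sep. intro i.
      exact (f_equal (fun f => proj1_sig (f (i, a))) E).
    + intro p; split; auto.
    + exact hh.
Qed.

Lemma func_sd S op : functional S op -> subdirect_product_of_flat S op.
Proof.
  intros [X [Y [A [Apf [Acl [h [hinj [hA hhom]]]]]]]].
  assert (pf : forall a, is_partial_function (h a)) by (intro a; apply Apf, hA; eauto).
  set (phi := fun (x : X) a =>
    match excluded_middle_informative (dom (h a) x) with
    | left H => Some (proj1_sig (constructive_indefinite_description _ H))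
    | right _ => None
    end).
  assert (pc : forall x a y, phi x a = Some y <-> h a x y).
  { intros x a y. unfold phi. destruct (excluded_middle_informative (dom (h a) x)) as [H|H].
    - destruct (constructive_indefinite_description _ H) as [y0 Hy0]; simpl.
      split; [intro E; inversion E; subst; auto|intro Hy; f_equal; eapply pf; eauto].
    - split; [discriminate|intro Hy; exfalso; apply H; exists y; auto]. }
  assert (oext : forall (o1 o2 : option Y), (forall y, o1 = Some y <-> o2 = Some y) -> o1 = o2).
  { intros [u|] [v|] H.
    - destruct (H u) as [H1 _]. symmetry; apply H1; reflexivity.
    - destruct (H u) as [H1 _]. specialize (H1 eq_refl). discriminate.
    - destruct (H v) as [_ H1]. specialize (H1 eq_refl). discriminate.
    - reflexivity. }
  apply (sd_of_family S op X (fun _ : X => Y) phi).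
  - intros x a b. apply oext; intro y. rewrite pc, hhom.
    unfold restricted_union, rel_union, rel_minus, rel_inter, dom.
    destruct (phi x a) as [u|] eqn:Ea; destruct (phi x b) as [v|] eqn:Eb; simpl.
    + assert (ha : forall y, h a x y <-> u = y) by (intro y'; rewrite <- pc, Ea; split; congruence).
      assert (hb : forall y, h b x y <-> v = y) by (intro y'; rewrite <- pc, Eb; split; congruence).
      destruct (excluded_middle_informative (u = v)) as [<-|nuv].
      * setoid_rewrite ha; setoid_rewrite hb. split.
        -- intros [[[H1 H2]|[H1 H2]]|[H1 H2]]; try congruence; exfalso; eauto.
        -- intro E; inversion E; subst; left; right; auto.
      * setoid_rewrite ha; setoid_rewrite hb. split; [|discriminate].
        intros [[[H1 H2]|[H1 H2]]|[H1 H2]]; exfalso; eauto. congruence.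
    + assert (ha : forall y, h a x y <-> u = y) by (intro y'; rewrite <- pc, Ea; split; congruence).
      assert (hb : forall y, ~ h b x y) by (intro y'; rewrite <- pc, Eb; discriminate).
      setoid_rewrite ha. split.
      * intros [[[H1 H2]|[H1 H2]]|[H1 H2]]; [congruence| exfalso; eapply hb; eauto | exfalso; eapply hb; eauto].
      * intro E; inversion E; subst. left; left; split; auto. intros [y' Hy']; eapply hb; eauto.
    + assert (hb : forall y, h b x y <-> v = y) by (intro y'; rewrite <- pc, Eb; split; congruence).
      assert (ha : forall y, ~ h a x y) by (intro y'; rewrite <- pc, Ea; discriminate).
      setoid_rewrite hb. split.
      * intros [[[H1 H2]|[H1 H2]]|[H1 H2]]; [exfalso; eapply ha; eauto| exfalso; eapply ha; eauto | congruence].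
      * intro E; inversion E; subst. right; split; auto. intros [y' Hy']; eapply ha; eauto.
    + assert (hb : forall y, ~ h b x y) by (intro y'; rewrite <- pc, Eb; discriminate).
      assert (ha : forall y, ~ h a x y) by (intro y'; rewrite <- pc, Ea; discriminate).
      split; [|discriminate].
      intros [[[H1 H2]|[H1 H2]]|[H1 H2]]; exfalso; [eapply ha|eapply ha|eapply hb]; eauto.
  - intros a b H. apply hinj. apply functional_extensionality; intro x.
    apply functional_extensionality; intro y. apply propositional_extensionality.
    rewrite <- !pc, H. tauto.
Qed.

Lemma sd_func S op : subdirect_product_of_flat S op -> functional S op.
Proof.
  intros [I [T [opT [z [Hf [B [HB [Hsurj [h [hinj [hBh hhom]]]]]]]]]]].
  set (Y := {i : I & T i}).
  set (rep := fun a (x : I) (y : Y) => y = existT T x (h a x) /\ h a x <> z x).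
  assert (domr : forall a x, dom (rep a) x <-> h a x <> z x).
  { intros a x; unfold dom, rep; split; [intros [y [_ H]]; auto|intro H; eexists; split; eauto]. }
  assert (rh : forall a b, rep (op a b) = restricted_union (rep a) (rep b)).
  { intros a b. apply functional_extensionality; intro x.
    apply functional_extensionality; intro y. apply propositional_extensionality.
    unfold restricted_union, rel_union, rel_minus, rel_inter.
    rewrite !domr. unfold rep. rewrite hhom. cbv beta.
    destruct (Hf x) as [H1 [H2 H3]].
    destruct (classic (h a x = z x)) as [Ea|Ea].
    - rewrite Ea, (proj2 (H3 _)). tauto.
    - destruct (classic (h b x = z x)) as [Eb|Eb].
      + rewrite Eb, (proj1 (H3 _)). tauto.
      + destruct (classic (h a x = h b x)) as [E|E].
        * rewrite <- E, H2. tauto.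
        * rewrite (H1 _ _ E Ea Eb). split; [tauto|].
          intros [[[_ C]|[[-> _] [C _]]]|[_ C]]; try tauto.
          apply inj_pair2 in C. contradiction. }
  exists I, Y, (fun f => exists a, rep a = f). split; [|split].
  - intros f [a <-] x y y' [-> _] [-> _]. reflexivity.
  - intros f g [a <-] [b <-]. exists (op a b). apply rh.
  - exists rep. split; [|split].
    + intros a b E. apply hinj. apply functional_extensionality_dep; intro x.
      assert (Hr : forall y, rep a x y <-> rep b x y) by (intro y; rewrite E; tauto).
      destruct (classic (h a x = z x)) as [Ea|Ea];
      destruct (classic (h b x = z x)) as [Eb|Eb].
      * congruence.
      * exfalso. destruct (proj2 (Hr (existT T x (h b x)))) as [_ C]; [split; auto|auto].
      * exfalso. destruct (proj1 (Hr (existT T x (h a x)))) as [C _]; [split; auto|].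
        apply inj_pair2 in C. congruence.
      * destruct (proj1 (Hr (existT T x (h a x)))) as [C _]; [split; auto|].
        apply inj_pair2 in C. auto.
    + intro f; tauto.
    + exact rh.
Qed.

Lemma flat_sz {T o z} (Hf : flat_vee_algebra T o z) y : o z (o z y) = y.
Proof. destruct Hf as [_ [_ H3]]. rewrite (proj2 (H3 y)). apply H3. Qed.

Lemma flat_snz {T o z} (Hf : flat_vee_algebra T o z) x y : x <> z -> o x (o x y) = x.
Proof.
  intro hx. destruct Hf as [H1 [H2 H3]].
  destruct (classic (y = z)) as [->|hy].
  - rewrite (proj1 (H3 x)). apply H2.
  - destruct (classic (x = y)) as [<-|hxy].
    + rewrite !H2; reflexivity.
    + rewrite (H1 x y hxy hx hy). apply H3.
Qed.

Lemma flat_comm {T o z} (Hf : flat_vee_algebra T o z) x y : o x y = o y x.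
Proof.
  destruct Hf as [H1 [H2 H3]].
  destruct (classic (x = z)) as [->|hx]. { rewrite (proj1 (H3 y)), (proj2 (H3 y)); auto. }
  destruct (classic (y = z)) as [->|hy]. { rewrite (proj1 (H3 x)), (proj2 (H3 x)); auto. }
  destruct (classic (x = y)) as [<-|hxy]; auto.
  rewrite H1, H1; auto.
Qed.

Lemma flat_nz {T o z} (Hf : flat_vee_algebra T o z) x y :
  o x y <> z -> x <> z -> y <> z -> x = y.
Proof.
  intros h hx hy. apply NNPP; intro hxy. apply h. apply (proj1 Hf); auto.
Qed.

Lemma flat_vee {T o z} (Hf : flat_vee_algebra T o z) : vee_algebra T o.
Proof.
  pose proof (flat_sz Hf) as Sz. pose proof (flat_snz Hf) as Snz.
  pose proof (flat_comm Hf) as C.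
  assert (Hid : forall a, o a a = a) by apply Hf.
  assert (Hz : forall a, o a z = a /\ o z a = a) by apply Hf.
  unfold vee_algebra, left_regular_band, sqcup, lesssim.
  split; [split; [|split]|split; [|split; [|split; [|split]]]].
  - intros a b c. destruct (classic (a = z)) as [->|ha].
    + rewrite !Sz. reflexivity.
    + rewrite !Snz; auto. rewrite Snz; auto.
  - intro a. rewrite !Hid. reflexivity.
  - intros a b. destruct (classic (a = z)) as [->|ha].
    + rewrite Sz. destruct (classic (b = z)) as [->|hb]; [rewrite Sz; auto|rewrite Snz; auto].
    + rewrite !Snz; auto.
  - exact C.
  - exact Hid.
  - intros a b. destruct (classic (o a b = z)) as [E|E].
    + rewrite E, Sz. reflexivity.
    + rewrite (Snz _ _ E).
      destruct (classic (a = z)) as [->|ha]. { rewrite Sz, (proj2 (Hz b)). reflexivity. }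
      rewrite (Snz _ _ ha).
      destruct (classic (b = z)) as [->|hb]. { apply Hz. }
      rewrite <- (flat_nz Hf _ _ E ha hb). apply Hid.
  - intros a b c. destruct (classic (a = z)) as [->|ha].
    + rewrite !Sz. reflexivity.
    + rewrite !Snz; auto.
  - intros a b c d Ha Hb Hc Hab Hbc. unfold sqcup in *.
    destruct (classic (d = z)) as [->|hd].
    { rewrite (proj1 (Hz _)). apply Hid. }
    assert (nz : forall x, o x (o x d) = x -> x <> z).
    { intros x Hx ->. rewrite Sz in Hx. auto. }
    pose proof (nz _ Ha) as na. pose proof (nz _ Hb) as nb. pose proof (nz _ Hc) as nc.
    pose proof (nz _ Hab) as nab. pose proof (nz _ Hbc) as nbc.
    pose proof (flat_nz Hf _ _ nab na nb) as e1. pose proof (flat_nz Hf _ _ nbc nb nc) as e2.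
    subst. rewrite Hid. exact Ha.
Qed.

Lemma sd_vee S op : subdirect_product_of_flat S op -> vee_algebra S op.
Proof.
  intros [I [T [opT [z [Hf [B [HB [Hsurj [h [hinj [hBh hhom]]]]]]]]]]].
  assert (FV : forall i, vee_algebra (T i) (opT i)) by (intro; apply (flat_vee (Hf i))).
  assert (hs : forall a b, h (sqcup op a b) = fun i => sqcup (opT i) (h a i) (h b i)).
  { intros a b. unfold sqcup. rewrite !hhom. reflexivity. }
  assert (pt : forall (f g : forall i, T i), f = g -> forall i, f i = g i).
  { intros f g -> i; reflexivity. }
  unfold vee_algebra, left_regular_band, lesssim.
  split; [split; [|split]|split; [|split; [|split; [|split]]]].
  - intros a b c. apply hinj. rewrite !hs. apply functional_extensionality_dep; intro i.
    apply (FV i).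
  - intros a. apply hinj. rewrite !hs. apply functional_extensionality_dep; intro i.
    apply (FV i).
  - intros a b. apply hinj. rewrite !hs. apply functional_extensionality_dep; intro i.
    apply (FV i).
  - intros a b. apply hinj. rewrite !hhom. apply functional_extensionality_dep; intro i.
    apply (FV i).
  - intros a. apply hinj. rewrite !hhom. apply functional_extensionality_dep; intro i.
    apply (FV i).
  - intros a b. apply hinj. repeat (rewrite hs || rewrite hhom). apply functional_extensionality_dep; intro i.
    apply (FV i).
  - intros a b c. apply hinj. repeat (rewrite hs || rewrite hhom). apply functional_extensionality_dep; intro i.
    apply (FV i).
  - intros a b c d Ha Hb Hc Hab Hbc. apply hinj. rewrite !hs, !hhom.
    apply functional_extensionality_dep; intro i.
    apply (f_equal h) in Ha, Hb, Hc, Hab, Hbc. rewrite !hs in Ha, Hb, Hc, Hab, Hbc.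
    rewrite !hhom in Hab, Hbc.
    apply (proj2 (proj2 (proj2 (proj2 (proj2 (FV i)))))) with (b := h b i);
      unfold lesssim;
      [apply (pt _ _ Ha i)|apply (pt _ _ Hb i)|apply (pt _ _ Hc i)|apply (pt _ _ Hab i)|apply (pt _ _ Hbc i)].
Qed.
Lemma zorn_plain (T:Type) (P : (T->Prop) -> Prop) :
  (forall F : (T->Prop)->Prop, (forall X, F X -> P X) ->
     (forall X Y, F X -> F Y -> (forall t, X t -> Y t) \/ (forall t, Y t -> X t)) ->
     P (fun t => exists2 X, F X & X t)) ->
  exists A, P A /\ forall B, (forall t, A t -> B t) -> P B -> forall t, B t -> A t.
Proof.
intros H.
destruct (@classical_sets.Zorn_bigcup T P) as [A [PA HA]].
- intros F FP Ftot. apply H; [exact FP| exact Ftot].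
- exists A; split; [exact PA|]. intros B AB PB t Bt.
  apply NNPP; intro nA.
  apply (HA B); [|exact PB]. split; [exact AB|]. intro BA. apply nA, BA, Bt.
Qed.


Lemma V_assoc {S op} (V : vee_algebra S op) a b c :
  sqcup op a (sqcup op b c) = sqcup op (sqcup op a b) c.
Proof. apply V. Qed.
Lemma V_idem {S op} (V : vee_algebra S op) a : sqcup op a a = a.
Proof. apply V. Qed.
Lemma V_lrb {S op} (V : vee_algebra S op) a b : sqcup op a b = sqcup op (sqcup op a b) a.
Proof. apply V. Qed.
Lemma V_comm {S op} (V : vee_algebra S op) a b : op a b = op b a.
Proof. apply V. Qed.
Lemma V_oidem {S op} (V : vee_algebra S op) a : op a a = a.
Proof. apply V. Qed.
Lemma V_3 {S op} (V : vee_algebra S op) a b : sqcup op (op a b) (sqcup op a b) = sqcup op a b.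
Proof. apply V. Qed.
Lemma V_4 {S op} (V : vee_algebra S op) a b c :
  sqcup op a (op b c) = op (sqcup op a b) (sqcup op a c).
Proof. apply V. Qed.
Lemma V_q {S op} (V : vee_algebra S op) a b c d :
  lesssim op d a -> lesssim op d b -> lesssim op d c ->
  lesssim op d (op a b) -> lesssim op d (op b c) -> lesssim op d (op a c).
Proof. apply V. Qed.

Lemma le_refl {S op} (V : vee_algebra S op) a : lesssim op a a.
Proof. apply (V_idem V). Qed.
Lemma le_trans {S op} (V : vee_algebra S op) d a b :
  lesssim op d a -> lesssim op a b -> lesssim op d b.
Proof.
  unfold lesssim; intros H1 H2. rewrite <- H2, <- (V_assoc V), H1. reflexivity.
Qed.
Lemma le_l {S op} (V : vee_algebra S op) a b : lesssim op a (sqcup op a b).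
Proof. unfold lesssim. symmetry. apply (V_lrb V). Qed.
Lemma le_r {S op} (V : vee_algebra S op) a b : lesssim op b (sqcup op a b).
Proof. unfold lesssim. rewrite <- (V_assoc V), (V_idem V). reflexivity. Qed.
Lemma le_join {S op} (V : vee_algebra S op) a b c :
  lesssim op a c -> lesssim op b c -> lesssim op (sqcup op a b) c.
Proof. unfold lesssim; intros H1 H2. rewrite (V_assoc V), H1, H2. reflexivity. Qed.
Lemma le_absorb {S op} (V : vee_algebra S op) p q : sqcup op p q = q -> lesssim op p q.
Proof. unfold lesssim; intro H. rewrite <- H at 1. rewrite <- (V_lrb V). exact H. Qed.
Lemma le_vee {S op} (V : vee_algebra S op) x y : lesssim op (op x y) (sqcup op x y).
Proof. apply le_absorb; auto. apply (V_3 V). Qed.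
Lemma le_mono {S op} (V : vee_algebra S op) a a' b b' :
  lesssim op a a' -> lesssim op b b' -> lesssim op (sqcup op a b) (sqcup op a' b').
Proof.
  intros H1 H2. apply le_join; auto.
  - eapply le_trans; eauto. apply le_l; auto.
  - eapply le_trans; eauto. apply le_r; auto.
Qed.
Lemma le_F2 {S op} (V : vee_algebra S op) x y : lesssim op x (sqcup op (op x y) y).
Proof.
  apply le_trans with (sqcup op y x); auto. apply le_r; auto.
  replace (sqcup op y x) with (op (op x y) y).
  - apply le_vee; auto.
  - unfold sqcup. rewrite (V_comm V (op x y) y), (V_comm V x y). reflexivity.
Qed.
Lemma le_E {S op} (V : vee_algebra S op) a b :
  lesssim op a b -> lesssim op b a -> lesssim op a (op a b) -> a = b.
Proof.
  unfold lesssim, sqcup; intros Hab Hba H.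
  assert (e1 : op (op a b) a = a) by (rewrite (V_comm V); exact Hba).
  rewrite e1, e1 in H.
  rewrite (V_comm V b a), <- H, (V_comm V b a), <- H in Hab. exact Hab.
Qed.

Definition isI {S} (op : S -> S -> S) (J : S -> Prop) : Prop :=
  (forall d j, lesssim op d j -> J j -> J d) /\ (forall x y, J x -> J y -> J (op x y)).

Lemma isI_sq {S op} (V : vee_algebra S op) J : isI op J -> forall x y, J x -> J y -> J (sqcup op x y).
Proof. intros [_ H] x y hx hy. unfold sqcup. auto. Qed.

Lemma down_isI {S op} (V : vee_algebra S op) c : isI op (fun s => lesssim op s c).
Proof.
  split.
  - intros d j H1 H2. eapply (le_trans V); eauto.
  - intros x y hx hy. eapply (le_trans V). apply (le_vee V); auto. apply (le_join V); auto.
Qed.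

Lemma sep_ideal {S op} (V : vee_algebra S op) u c : ~ lesssim op u c ->
  exists J, isI op J /\ J c /\ ~ J u /\
    (forall w, ~ J w -> exists j, J j /\ lesssim op u (sqcup op w j)).
Proof.
  intro nuc.
  set (P := fun K : S -> Prop => isI op (fun s => K s \/ lesssim op s c) /\ ~ (K u \/ lesssim op u c)).
  destruct (zorn_plain S P) as [A [[AI Au] Amax]].
  - intros F FP Ftot. split.
    + split.
      * intros d j Hdj [[X FX Xj]|jc].
        -- destruct (proj1 (proj1 (FP X FX)) d j Hdj (or_introl Xj)) as [Xd|dc]; [left; exists X; auto|right; auto].
        -- right. eapply (le_trans V); eauto.
      * intros x y [[X FX Xx]|xc] [[Y FY Yy]|yc].
        -- destruct (Ftot X Y FX FY) as [XY|YX].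
           ++ destruct (proj2 (proj1 (FP Y FY)) x y (or_introl (XY _ Xx)) (or_introl Yy)) as [h|h];
                [left; exists Y; auto|right; auto].
           ++ destruct (proj2 (proj1 (FP X FX)) x y (or_introl Xx) (or_introl (YX _ Yy))) as [h|h];
                [left; exists X; auto|right; auto].
        -- destruct (proj2 (proj1 (FP X FX)) x y (or_introl Xx) (or_intror yc)) as [h|h];
             [left; exists X; auto|right; auto].
        -- destruct (proj2 (proj1 (FP Y FY)) x y (or_intror xc) (or_introl Yy)) as [h|h];
             [left; exists Y; auto|right; auto].
        -- right. apply (proj2 (down_isI V c)); auto.
    + intros [[X FX Xu]|uc]; [apply (proj2 (FP X FX)); auto|auto].
  - set (J := fun s => A s \/ lesssim op s c).
    exists J. split; [exact AI|]. split; [right; apply (le_refl V); auto|]. split; [exact Au|].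
    intros w nw.
    set (Jw := fun d => exists j, J j /\ lesssim op d (sqcup op w j)).
    assert (JJw : forall s, J s -> Jw s).
    { intros s hs. exists s. split; auto. apply (le_r V); auto. }
    assert (cJ : J c) by (right; apply (le_refl V); auto).
    assert (IJw : isI op Jw).
    { split.
      - intros d j Hdj [j' [Hj' Hl]]. exists j'. split; auto. eapply (le_trans V); eauto.
      - intros x y [j1 [J1 H1]] [j2 [J2 H2]]. exists (sqcup op j1 j2). split.
        + apply (isI_sq V); auto.
        + eapply (le_trans V). apply (le_vee V); auto. apply (le_join V); auto.
          * eapply (le_trans V); eauto. apply (le_mono V); auto. apply (le_refl V); auto. apply (le_l V); auto.
          * eapply (le_trans V); eauto. apply (le_mono V); auto. apply (le_refl V); auto. apply (le_r V); auto. }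
    apply NNPP; intro nu.
    assert (PJw : P Jw).
    { split.
      - destruct IJw as [I1 I2]. split.
        + intros d j Hdj [h|h]; left; [eapply I1; eauto|]. apply JJw; right; eapply (le_trans V); eauto.
        + intros x y hx hy. left. apply I2; [destruct hx as [hx|hx]|destruct hy as [hy|hy]]; auto;
            apply JJw; right; auto.
      - intros [h|h]; [apply nu; exact h|apply nuc; exact h]. }
    assert (wA : A w).
    { apply (Amax Jw); auto.
      - intros t At. apply JJw. left; auto.
      - exists c. split; auto. apply (le_l V); auto. }
    apply nw. left; auto.
Qed.

Lemma C2_of {S op} (V : vee_algebra S op) J : isI op J ->
  forall x y, ~ J x -> J y -> ~ J (op x y).
Proof.
  intros IJ x y nx hy hxy. apply nx.
  apply (proj1 IJ) with (sqcup op (op x y) y). apply (le_F2 V).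
  apply (isI_sq V); auto.
Qed.

Lemma lift_le {S op} (V : vee_algebra S op) u x j1 j :
  lesssim op j1 j -> lesssim op u (sqcup op x j1) -> lesssim op u (sqcup op j x).
Proof.
  intros H1 H2. eapply (le_trans V); [exact H2|]. apply (le_join V).
  - apply (le_r V).
  - eapply (le_trans V); [exact H1|]. apply (le_l V).
Qed.

Lemma C3_of {S op} (V : vee_algebra S op) J u : isI op J -> ~ J u ->
  (forall w, ~ J w -> exists j, J j /\ lesssim op u (sqcup op w j)) ->
  forall x y z, ~ J x -> ~ J y -> ~ J z -> ~ J (op x y) -> ~ J (op y z) -> ~ J (op x z).
Proof.
  intros IJ nu M x y z nx ny nz nxy nyz hxz.
  destruct (M x nx) as [j1 [J1 L1]]. destruct (M y ny) as [j2 [J2 L2]].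
  destruct (M z nz) as [j3 [J3 L3]]. destruct (M _ nxy) as [j4 [J4 L4]].
  destruct (M _ nyz) as [j5 [J5 L5]].
  set (j := sqcup op j1 (sqcup op j2 (sqcup op j3 (sqcup op j4 j5)))).
  assert (Jj : J j) by (unfold j; repeat apply (isI_sq V); auto).
  assert (l1 : lesssim op j1 j) by apply (le_l V).
  assert (l2 : lesssim op j2 j) by (eapply (le_trans V); [apply (le_l V)|apply (le_r V)]).
  assert (l3 : lesssim op j3 j) by (eapply (le_trans V); [apply (le_l V)|];
    eapply (le_trans V); [apply (le_r V)|apply (le_r V)]).
  assert (l4 : lesssim op j4 j) by (eapply (le_trans V); [apply (le_l V)|];
    eapply (le_trans V); [apply (le_r V)|]; eapply (le_trans V); [apply (le_r V)|apply (le_r V)]).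
  assert (l5 : lesssim op j5 j) by (eapply (le_trans V); [apply (le_r V)|];
    eapply (le_trans V); [apply (le_r V)|]; eapply (le_trans V); [apply (le_r V)|apply (le_r V)]).
  apply nu. apply (proj1 IJ) with (sqcup op j (op x z)).
  - rewrite (V_4 V). apply (V_q V) with (b := sqcup op j y).
    + exact (lift_le V u x j1 j l1 L1).
    + exact (lift_le V u y j2 j l2 L2).
    + exact (lift_le V u z j3 j l3 L3).
    + rewrite <- (V_4 V). exact (lift_le V u _ j4 j l4 L4).
    + rewrite <- (V_4 V). exact (lift_le V u _ j5 j l5 L5).
  - apply (isI_sq V); auto.
Qed.

Definition cls {S} (op : S -> S -> S) (J : S -> Prop) (x : S) : S -> Prop :=
  fun c => ~ J c /\ ~ J (op x c).

Definition phiJ {S} (op : S -> S -> S) (J : S -> Prop) (x : S) : option (S -> Prop) :=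
  if excluded_middle_informative (J x) then None else Some (cls op J x).

Definition goodJ {S} (op : S -> S -> S) (J : S -> Prop) : Prop :=
  isI op J /\ (forall x y, ~ J x -> J y -> ~ J (op x y)) /\
  (forall x y z, ~ J x -> ~ J y -> ~ J z -> ~ J (op x y) -> ~ J (op y z) -> ~ J (op x z)).

Lemma cls_eq {S op} (V : vee_algebra S op) J (G : goodJ op J) p q :
  ~ J p -> ~ J q -> ~ J (op p q) -> cls op J p = cls op J q.
Proof.
  destruct G as [IJ [G2 G3]]. intros np nq npq.
  apply functional_extensionality; intro c. apply propositional_extensionality.
  unfold cls. split; intros [nc h]; split; auto.
  - apply (G3 q p c); auto. rewrite (V_comm V); auto.
  - apply (G3 p q c); auto.
Qed.

Lemma cls_neq {S op} (V : vee_algebra S op) J p q :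
  ~ J q -> J (op p q) -> cls op J p <> cls op J q.
Proof.
  intros nq hpq E. assert (H : cls op J q q) by (split; auto; rewrite (V_oidem V); auto).
  rewrite <- E in H. destruct H as [_ H]; auto.
Qed.

Lemma phiJ_hom {S op} (V : vee_algebra S op) J (G : goodJ op J) a b :
  phiJ op J (op a b) = fopt (phiJ op J a) (phiJ op J b).
Proof.
  pose proof G as [IJ [G2 G3]].
  assert (nsq : forall x y, ~ J x -> ~ J (sqcup op x y)).
  { intros x y nx h. apply nx. apply (proj1 IJ) with (sqcup op x y); auto. apply (le_l V). }
  unfold phiJ.
  destruct (excluded_middle_informative (J a)) as [ja|ja];
  destruct (excluded_middle_informative (J b)) as [jb|jb].
  - destruct (excluded_middle_informative (J (op a b))) as [_|n]; auto.
    exfalso; apply n, (proj2 IJ); auto.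
  - destruct (excluded_middle_informative (J (op a b))) as [h|n].
    + exfalso. rewrite (V_comm V) in h. apply (G2 b a); auto.
    + simpl. f_equal. apply (cls_eq V J G); auto.
      rewrite (V_comm V), (V_comm V a b). apply nsq; auto.
  - destruct (excluded_middle_informative (J (op a b))) as [h|n].
    + exfalso. apply (G2 a b); auto.
    + simpl. f_equal. apply (cls_eq V J G); auto.
      rewrite (V_comm V). apply nsq; auto.
  - simpl. destruct (excluded_middle_informative (J (op a b))) as [h|n].
    + destruct (excluded_middle_informative (cls op J a = cls op J b)) as [E|E]; auto.
      exfalso. apply (cls_neq V J a b); auto.
    + destruct (excluded_middle_informative (cls op J a = cls op J b)) as [E|E].
      * f_equal. apply (cls_eq V J G); auto. rewrite (V_comm V). apply nsq; auto.
      * exfalso. apply E. apply (cls_eq V J G); auto.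
Qed.

Lemma sep_good {S op} (V : vee_algebra S op) u c : ~ lesssim op u c ->
  exists J, goodJ op J /\ J c /\ ~ J u.
Proof.
  intro H. destruct (sep_ideal V u c H) as [J [IJ [Jc [nu M]]]].
  exists J. split; [|auto]. split; [auto|split].
  - apply C2_of; auto.
  - apply (C3_of V J u); auto.
Qed.

Lemma phiJ_sep {S op} (V : vee_algebra S op) J a b :
  ~ J a -> (J b \/ J (op a b)) -> phiJ op J a <> phiJ op J b.
Proof.
  intros na hb. unfold phiJ.
  destruct (excluded_middle_informative (J a)) as [|_]; [contradiction|].
  destruct (excluded_middle_informative (J b)) as [jb|jb]; [discriminate|].
  destruct hb as [hb|hb]; [contradiction|].
  intro E. inversion E as [E']. apply (cls_neq V J a b); auto.
Qed.

Lemma vee_sd {S op} (V : vee_algebra S op) : subdirect_product_of_flat S op.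
Proof.
  apply (sd_of_family S op {J : S -> Prop | goodJ op J} (fun _ => S -> Prop)
           (fun i => phiJ op (proj1_sig i))).
  - intros [J G] a b. simpl. apply (phiJ_hom V J G).
  - intros a b H. apply NNPP; intro nab.
    assert (K : exists J, goodJ op J /\ ((~ J a /\ (J b \/ J (op a b))) \/ (~ J b /\ (J a \/ J (op b a))))).
    { destruct (classic (lesssim op a b)) as [lab|lab].
      - destruct (classic (lesssim op b a)) as [lba|lba].
        + destruct (classic (lesssim op a (op a b))) as [l|l].
          * exfalso; apply nab, (le_E V); auto.
          * destruct (sep_good V _ _ l) as [J [G [h1 h2]]]. exists J; eauto.
        + destruct (sep_good V _ _ lba) as [J [G [h1 h2]]]. exists J; eauto.
      - destruct (sep_good V _ _ lab) as [J [G [h1 h2]]]. exists J; eauto. }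
    destruct K as [J [G [[h1 h2]|[h1 h2]]]].
    + apply (phiJ_sep V J a b h1 h2). exact (H (exist _ J G)).
    + apply (phiJ_sep V J b a h1 h2). symmetry. exact (H (exist _ J G)).
Qed.

Theorem theorem4p7 (S : Type) (op : S -> S -> S) :
  (functional S op <-> vee_algebra S op) /\
  (vee_algebra S op <-> subdirect_product_of_flat S op).
Proof.
  split; split.
  - intro H. apply sd_vee, func_sd, H.
  - intro H. apply sd_func, vee_sd, H.
  - intro H. apply vee_sd, H.
  - apply sd_vee.
Qed.
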